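(* Let $\mathcal{I}=(I,w,v,m,k)$ be a CMK instance, $S\subseteq I$, and $\delta\in(0,0.1)$ with $\delta^{-1}\in\mathbb{N}$. Let $L=\{i\in S:\tilde w(i)\ge\delta\}$. Then for every $y\in([0,1]\cap\mathbb{Q})^I$ with $\mathrm{supp}(y)\subseteq S\setminus L$ there is a fractional solution $x$ such that $\mathrm{cover}(x)=y$ and $\|x\|\le 2\sum_{i\in I}y_i\,\tilde w(i)+1$.
   Context: A CMK instance is a tuple $\mathcal{I}=(I,w,v,m,k)$ with $I$ a finite item set, $w:I\to[0,1]$, $v:I\to\mathbb{R}_{\ge0}$, $m,k\in\mathbb{N}_{>0}$. The adjusted weight of $i\in I$ is $\tilde w(i)=w(i)+\frac1k$. A configuration is $C\subseteq I$ with $|C|\le k$ and $\sum_{i\in C}w(i)\le1$; $\mathcal{C}$ is the set of configurations and $\mathcal{C}(i)=\{C\in\mathcal{C}:i\in C\}$. A fractional solution is $x\in\mathbb{R}_{\ge0}^{\mathcal{C}}$; $\mathrm{cover}_i(x)=\sum_{C\in\mathcal{C}(i)}x_C$ and $\|x\|=\sum_{C}x_C$. $\mathrm{supp}(y)=\{i:y_i\ne0\}$. *)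

(* Defs.v *)
From HB Require Import structures.
From mathcomp Require Import all_boot all_order all_algebra.
From mathcomp Require Import reals.
Set Implicit Arguments. Unset Strict Implicit. Unset Printing Implicit Defensive.
Import Order.TTheory GRing.Theory Num.Theory.
Local Open Scope ring_scope.

Section CMK.
Variables (R : realType) (I : finType) (w : I -> R) (k : nat).

Definition adj_weight (i : I) : R := w i + k%:R^-1.

Definition is_config (C : {set I}) : bool :=
  (#|C| <= k)%N && (\sum_(i in C) w i <= 1).

(* A fractional solution x ∈ R_{>=0}^{configurations}, represented as a
   function on all subsets that is nonnegative and vanishes outside the
   set of configurations. *)
Definition frac_sol (x : {set I} -> R) : Prop :=
  (forall C, 0 <= x C) /\ (forall C, ~~ is_config C -> x C = 0).

Definition cmk_cover (x : {set I} -> R) (i : I) : R :=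
  \sum_(C : {set I} | is_config C && (i \in C)) x C.

Definition frac_norm (x : {set I} -> R) : R :=
  \sum_(C : {set I} | is_config C) x C.
End CMK.

(* Main.v *)
Require Import Defs.
From HB Require Import structures.
From mathcomp Require Import all_boot all_order all_algebra.
From mathcomp Require Import reals lra ring.
Import Order.TTheory GRing.Theory Num.Theory.
Set Implicit Arguments. Unset Strict Implicit. Unset Printing Implicit Defensive.
Local Open Scope ring_scope.

Definition ld (R : realType) (I : finType) (w : I -> R) (k : nat) (C : {set I}) : R :=
  \sum_(j in C) adj_weight w k j.

Lemma wt_ge0 (R : realType) (I : finType) (w : I -> R) (k : nat) i :
  (forall i, 0 <= w i) -> 0 <= adj_weight w k i.
Proof. by move=> hw; rewrite /adj_weight addr_ge0 // invr_ge0 ler0n. Qed.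

Lemma ld_ge0 (R : realType) (I : finType) (w : I -> R) (k : nat) (C : {set I}) :
  (forall i, 0 <= w i) -> 0 <= ld w k C.
Proof. by move=> hw; apply: sumr_ge0 => j _; apply: wt_ge0. Qed.

Lemma ld_config (R : realType) (I : finType) (w : I -> R) (k : nat) (C : {set I}) :
  (forall i, 0 <= w i) -> (0 < k)%N -> ld w k C <= 1 -> is_config w k C.
Proof.
move=> hw hk hl; rewrite /is_config.
have e : ld w k C = \sum_(j in C) w j + #|C|%:R / k%:R.
  by rewrite /ld /adj_weight big_split /= sumr_const mulr_natl.
have hs : 0 <= \sum_(j in C) w j by apply: sumr_ge0.
have hkp : 0 < k%:R :> R by rewrite ltr0n.
have hc : 0 <= #|C|%:R / k%:R :> R by rewrite divr_ge0 // ler0n.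
apply/andP; split; last by lra.
have h1 : #|C|%:R / k%:R <= 1 :> R by lra.
rewrite ler_pdivrMr // mul1r ler_nat in h1; exact: h1.
Qed.

Lemma ld_setD1 (R : realType) (I : finType) (w : I -> R) (k : nat) (C : {set I}) i :
  i \in C -> ld w k C = adj_weight w k i + ld w k (C :\ i).
Proof. by move=> hi; rewrite /ld (big_setD1 i hi). Qed.

Lemma sum_in (R : realType) (I : finType) (F : {set I} -> R) (P : pred {set I}) i :
  \sum_(C | P C && (i \in C)) F C = \sum_(D | P (i |: D) && (i \notin D)) F (i |: D).
Proof.
rewrite (reindex_onto (fun D => i |: D) (fun C => C :\ i)); last first.
  by move=> C /andP [_ h]; rewrite setD1K.
apply: eq_bigl => D; rewrite setU11 andbT.
case: (boolP (i \in D)) => hi /=.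
  rewrite andbF; apply/negbTE; rewrite negb_and; apply/orP; right; apply/eqP => h.
  have : i \in (i |: D) :\ i by rewrite h.
  by rewrite !inE eqxx.
by rewrite setU1K // eqxx andbT.
Qed.

Definition Inv (R : realType) (I : finType) (w : I -> R) (k : nat) (yr : I -> R) (B : R)
  (s : seq I) (x : {set I} -> R) : Prop :=
 [/\ forall C, 0 <= x C, forall C, 1 < ld w k C -> x C = 0, \sum_(C : {set I}) x C = B &
     forall j : I, \sum_(C : {set I} | j \in C) x C = if j \in s then yr j else 0].

Lemma exch (R : realType) (I : finType) (w : I -> R) (k : nat) (x : {set I} -> R) :
  \sum_(C : {set I}) x C * ld w k C = \sum_(j : I) adj_weight w k j * \sum_(C : {set I} | j \in C) x C.
Proof.
transitivity (\sum_(C : {set I}) \sum_(j : I) (if j \in C then x C * adj_weight w k j else 0)).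
  by apply: eq_bigr => C _; rewrite /ld mulr_sumr big_mkcond.
rewrite exchange_big; apply: eq_bigr => j _.
rewrite -big_mkcond /= mulr_sumr; by apply: eq_bigr => C _; rewrite mulrC.
Qed.

Lemma zero_in (R : realType) (I : finType) (w : I -> R) (k : nat) yr B s x i (C : {set I}) :
  Inv w k yr B s x -> i \notin s -> i \in C -> x C = 0.
Proof.
move=> [h0 _ _ hc] his hiC.
have := hc i; rewrite (negbTE his) => e.
exact: (psumr_eq0P (fun C _ => h0 C) e hiC).
Qed.

Lemma mass_ge1 (R : realType) (I : finType) (w : I -> R) (k : nat) (yr : I -> R) s x i :
  (forall i, 0 <= w i) -> (forall j, 0 <= yr j) ->
  Inv w k yr (1 + 2 * \sum_(j : I) yr j * adj_weight w k j) s x -> i \notin s ->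
  adj_weight w k i <= 1/2 ->
  1 <= \sum_(C : {set I} | (i \notin C) && (ld w k C + adj_weight w k i <= 1)) x C.
Proof.
move=> hw hy hI his hwi.
have hI' := hI; case: hI' => [h0 h1 hB hc].
pose A := fun C : {set I} => (i \notin C) && (ld w k C + adj_weight w k i <= 1).
rewrite -/(A _).
have hsplit : \sum_(C : {set I}) x C = \sum_(C | A C) x C + \sum_(C | ~~ A C) x C.
  by rewrite (bigID A).
rewrite hB in hsplit.
have hb : \sum_(C | ~~ A C) x C <= 2 * \sum_(j : I) yr j * adj_weight w k j.
  apply: (@le_trans _ _ (\sum_(C : {set I}) 2 * (x C * ld w k C))).
    rewrite big_mkcond /=; apply: ler_sum => C _.
    have hl := ld_ge0 k C hw.
    have hx := h0 C.
    case: ifP => hA; last by rewrite mulr_ge0 // mulr_ge0.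
    case: (boolP (i \in C)) => hiC.
      by rewrite (zero_in hI his hiC) mul0r mulr0.
    have hgt : 1 < ld w k C + adj_weight w k i.
      by rewrite ltNge; apply: contraNN hA => h; rewrite /A hiC h.
    have : 1/2 < ld w k C by lra.
    move=> hh; nra.
  rewrite -mulr_sumr exch ler_pM2l // ; apply: ler_sum => j _.
  rewrite hc; case: ifP => _; first by rewrite mulrC.
  by rewrite mulr0 mulr_ge0 // wt_ge0.
lra.
Qed.

Lemma step (R : realType) (I : finType) (w : I -> R) (k : nat) (yr : I -> R) s x i :
  (forall i, 0 <= w i) -> (forall j, 0 <= yr j <= 1) ->
  (forall j, yr j != 0 -> adj_weight w k j <= 1/2) ->
  Inv w k yr (1 + 2 * \sum_(j : I) yr j * adj_weight w k j) s x -> i \notin s ->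
  exists x', Inv w k yr (1 + 2 * \sum_(j : I) yr j * adj_weight w k j) (i :: s) x'.
Proof.
move=> hw hy hsm hI his.
have hI' := hI; case: hI' => [h0 h1 hB hc].
case: (eqVneq (yr i) 0) => hyi.
  exists x; split => // j; rewrite in_cons hc.
  case: (eqVneq j i) => [->|_] //=.
  by rewrite (negbTE his) hyi.
have hy0 : forall j, 0 <= yr j by move=> j; case/andP: (hy j).
have hM := mass_ge1 hw hy0 hI his (hsm _ hyi).
pose A := fun C : {set I} => (i \notin C) && (ld w k C + adj_weight w k i <= 1).
pose M := \sum_(C : {set I} | A C) x C.
have hM' : 1 <= M by exact: hM.
pose t := yr i / M.
have ht0 : 0 <= t by rewrite divr_ge0 // ?hy0 //; lra.
have ht1 : t <= 1.
  rewrite ler_pdivrMr; last by lra.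
  by case/andP: (hy i) => _ h; lra.
pose x' := fun C : {set I} => if i \in C then (if A (C :\ i) then t * x (C :\ i) else 0)
                              else (if A C then (1 - t) * x C else x C).
have x'U : forall D : {set I}, i \notin D -> x' (i |: D) = if A D then t * x D else 0.
  by move=> D hD; rewrite /x' setU11 setU1K.
have G : forall P : pred {set I}, (forall D, P (i |: D) = P D) ->
    \sum_(C | P C) x' C = \sum_(C | P C) x C.
  move=> P hP.
  rewrite (bigID (fun C : {set I} => i \in C)) /= [in RHS](bigID (fun C : {set I} => i \in C)) /=.
  rewrite [in RHS]big1 ?add0r; last by move=> C /andP [_ hiC]; exact: (zero_in hI his hiC).
  rewrite sum_in.
  rewrite (eq_big (fun D => P D && (i \notin D)) (fun D => if A D then t * x D else 0));
    last by move=> D /andP [_ hD]; rewrite x'U.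
    2: by move=> D; rewrite hP.
  rewrite -big_split /=; apply: eq_bigr => C /andP [_ hiC].
  rewrite /x' (negbTE hiC); case: (A C); ring.
exists x'; split.
- move=> C; rewrite /x'; case: ifP => _; case: ifP => _ //.
  + by rewrite mulr_ge0.
  + by rewrite mulr_ge0 // subr_ge0.
- move=> C hC; rewrite /x'; case: ifP => hiC.
    case: ifP => // /andP [_ hl].
    by move: hC; rewrite (ld_setD1 _ _ hiC); lra.
  by rewrite (h1 C hC); case: ifP => _; rewrite ?mulr0.
- by rewrite -hB; apply: (G predT).
- move=> j; rewrite in_cons.
  case: (eqVneq j i) => [->|hji] /=.
    have -> : \sum_(C : {set I} | i \in C) x' C = \sum_(C : {set I} | predT C && (i \in C)) x' C by [].
    rewrite sum_in (bigID A) /= [X in _ + X]big1 ?addr0; last first.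
      by move=> D /andP [hD hA]; rewrite x'U // (negbTE hA).
    rewrite (eq_big A (fun D => t * x D)); first last.
    + by move=> D /andP [hD hA]; rewrite x'U // hA.
    + move=> D; case: (boolP (A D)) => hA; rewrite ?andbT ?andbF //; by case/andP: hA.
    rewrite -mulr_sumr /t -/M divfK //; apply/eqP => e; rewrite e in hM'; lra.
  rewrite -hc; apply: (G (fun C => j \in C)) => D.
  by rewrite in_setU1 (negbTE hji).
Qed.

Lemma inv_seq (R : realType) (I : finType) (w : I -> R) (k : nat) (yr : I -> R) s :
  (forall i, 0 <= w i) -> (forall j, 0 <= yr j <= 1) ->
  (forall j, yr j != 0 -> adj_weight w k j <= 1/2) -> uniq s ->
  exists x, Inv w k yr (1 + 2 * \sum_(j : I) yr j * adj_weight w k j) s x.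
Proof.
move=> hw hy hsm; elim: s => [_ | i s IH /= /andP [his hu]].
  set B := 1 + _.
  have hB : 0 <= B.
    have : 0 <= \sum_(j : I) yr j * adj_weight w k j.
      apply: sumr_ge0 => j _; rewrite mulr_ge0 ?wt_ge0 //; by case/andP: (hy j).
    rewrite /B; lra.
  exists (fun C : {set I} => if C == set0 then B else 0); split.
  - by move=> C; case: ifP.
  - move=> C; case: eqP => // -> ; rewrite /ld big_set0; lra.
  - rewrite (bigD1 set0) //= eqxx big1 ?addr0 // => C /negbTE -> //.
  - move=> j; rewrite in_nil big1 // => C hj; case: eqP => // e.
    by rewrite e inE in hj.
have [x hx] := IH hu.
exact: step hw hy hsm hx his.
Qed.

Theorem lemma4p1 (R : realType) (I : finType) (w : I -> R) (v : I -> R)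
    (m k : nat)
    (hw : forall i, 0 <= w i <= 1) (hv : forall i, 0 <= v i)
    (hm : (0 < m)%N) (hk : (0 < k)%N)
    (S : {set I}) (delta : R)
    (hdelta : 0 < delta < 1 / 10)
    (hdinv : exists n : nat, delta^-1 = n%:R) :
  let L := [set i in S | delta <= adj_weight w k i] in
  forall y : I -> rat,
    (forall i, 0 <= y i <= 1) ->
    (forall i, y i != 0 -> i \in S :\: L) ->
    exists x : {set I} -> R,
      frac_sol w k x /\
      (forall i, cmk_cover w k x i = ratr (y i)) /\
      frac_norm w k x <= 2 * (\sum_(i : I) ratr (y i) * adj_weight w k i) + 1.
Proof.
move=> L y hy hsupp.
have hw0 : forall i, 0 <= w i by move=> i; case/andP: (hw i).
pose yr := fun i => (ratr (y i) : R).
have hyr : forall j, 0 <= yr j <= 1.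
  move=> j; case/andP: (hy j) => a b.
  by rewrite /yr ler0q a /= -(ratr_is_multiplicative R).2 ler_rat.
have hsm : forall j, yr j != 0 -> adj_weight w k j <= 1/2.
  move=> j hj.
  have hyj : y j != 0 by apply: contraNN hj; rewrite /yr => /eqP ->; rewrite rmorph0.
  move: (hsupp j hyj); rewrite !inE => /andP [hn hS].
  rewrite hS /= -ltNge in hn.
  case/andP: hdelta => _ hd; lra.
have [x [h0 h1 hB hc]] := inv_seq hw0 hyr hsm (enum_uniq I).
have hcfg : forall C, ~~ is_config w k C -> x C = 0.
  move=> C hC; apply: h1; rewrite ltNge; apply: contraNN hC.
  exact: ld_config.
have drop : forall P : pred {set I},
    \sum_(C | is_config w k C && P C) x C = \sum_(C | P C) x C.
  move=> P; rewrite [RHS](bigID (is_config w k)) /= [X in _ + X]big1 ?addr0.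
    by apply: eq_bigl => C; rewrite andbC.
  by move=> C /andP [_ h]; exact: hcfg.
exists x; split; [split => // | split].
- move=> j; rewrite /cmk_cover drop hc mem_enum //.
- rewrite /frac_norm.
  have -> : \sum_(C | is_config w k C) x C = \sum_(C | is_config w k C && predT C) x C.
    by apply: eq_bigl => C; rewrite andbT.
  rewrite drop; rewrite [X in X <= _](_ : _ = \sum_(C : {set I}) x C) // hB.
  rewrite addrC.
  by [].
Qed.
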